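(* Let $\pi:E\to\mathbb{R}^k$ be a fiber bundle, $L:J^1\pi\to\mathbb{R}$ a Lagrangian and ${\bf\Gamma}=(\Gamma_1,\dots,\Gamma_k)$ an integrable SOPDE on $J^1\pi$. Then $$\sum_{\alpha=1}^k\mathcal{L}_{\Gamma_\alpha}\Theta^\alpha_L=dL$$ if and only if $$\Gamma_\alpha\Big(\frac{\partial L}{\partial v^i_\alpha}\Big)-\frac{\partial L}{\partial q^i}=0,\qquad i=1,\dots,n.$$
   Context: $E$ is $(n+k)$-dimensional with adapted coordinates $(x^\alpha,q^i)$; $J^1\pi$ has induced coordinates $(x^\alpha,q^i,v^i_\alpha)$; summation over repeated indices. The Poincaré–Cartan $1$-forms are $\Theta^\alpha_L=L\,dx^\alpha+dL\circ S^\alpha$, where $S^\alpha$ is the canonical $(1,1)$-tensor field on $J^1\pi$ associated with $dx^\alpha$, locally $S^\alpha=(dq^i-v^i_\beta dx^\beta)\otimes\partial/\partial v^i_\alpha$; hence locally $\Theta^\alpha_L=\frac{\partial L}{\partial v^i_\alpha}(dq^i-v^i_\beta dx^\beta)+L\,dx^\alpha$. A SOPDE is a $k$-tuple of vector fields on $J^1\pi$ of the local form $\Gamma_\alpha=\partial/\partial x^\alpha+v^i_\alpha\partial/\partial q^i+\Gamma^i_{\alpha\beta}\partial/\partial v^i_\beta$ (equivalently $dx^\alpha(\Gamma_\beta)=\delta^\alpha_\beta$, $(dq^i-v^i_\gamma dx^\gamma)(\Gamma_\beta)=0$). Integrable means there is an integral section (a map $\psi:U\subset\mathbb{R}^k\to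 J^1\pi$ with $\psi_*(\partial/\partial x^\alpha)=\Gamma_\alpha\circ\psi$) through every point; the paper assumes throughout that integrable SOPDEs satisfy $[\Gamma_\alpha,\Gamma_\beta]=0$, equivalently $\Gamma^i_{\alpha\beta}=\Gamma^i_{\beta\alpha}$ and $\Gamma_\alpha(\Gamma^i_{\beta\gamma})=\Gamma_\beta(\Gamma^i_{\alpha\gamma})$. *)

(* Defs.v *)
(* Local (adapted-coordinate) model of J^1 pi. *)
From HB Require Import structures.
From mathcomp Require Import all_boot all_order all_algebra.
From mathcomp Require Import all_classical all_reals.
From mathcomp Require Import topology normedtype derive.
Set Implicit Arguments. Unset Strict Implicit. Unset Printing Implicit Defensive.
Import Order.TTheory GRing.Theory Num.Theory.
Import numFieldNormedType.Exports.
Local Open Scope classical_set_scope.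
Local Open Scope ring_scope.

Section J1.
Variables (R : realType) (k n : nat).

(* A point of J^1 pi in adapted coordinates (x^alpha, q^i, v^i_alpha):
   p.1 : 'rV_k  holds x,  p.2.1 : 'rV_n holds q,  p.2.2 : 'M_(n,k) holds v
   (v^i_alpha = p.2.2 i alpha).  Tangent vectors are elements of the same space. *)
Definition J1 := ('rV[R]_k * ('rV[R]_n * 'M[R]_(n, k)))%type.

Definition xc (p : J1) (a : 'I_k) : R := p.1 0 a.
Definition qc (p : J1) (i : 'I_n) : R := p.2.1 0 i.
Definition vc (p : J1) (i : 'I_n) (a : 'I_k) : R := p.2.2 i a.

Definition e_x (a : 'I_k) : J1 := (delta_mx 0 a, (0, 0)).
Definition e_q (i : 'I_n) : J1 := (0, (delta_mx 0 i, 0)).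
Definition e_v (i : 'I_n) (a : 'I_k) : J1 := (0, (0, delta_mx i a)).

Fixpoint iterD (vs : seq J1) (f : J1 -> R) : J1 -> R :=
  if vs is v :: vs' then fun p => 'D_v (iterD vs' f) p else f.
Definition smooth_on (D : set J1) (f : J1 -> R) : Prop :=
  forall (vs : seq J1) (p : J1), D p -> differentiable (iterD vs f) p.

Definition smooth_vf (D : set J1) (X : J1 -> J1) : Prop :=
  (forall a, smooth_on D (fun p => xc (X p) a)) /\
  (forall i, smooth_on D (fun p => qc (X p) i)) /\
  (forall i a, smooth_on D (fun p => vc (X p) i a)).

Definition vfapp (X : J1 -> J1) (f : J1 -> R) (p : J1) : R := 'D_(X p) f p.

Definition lie_bracket (X Y : J1 -> J1) (p : J1) : J1 :=
  'D_(X p) Y p - 'D_(Y p) X p.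

Definition dF (f : J1 -> R) (p : J1) (w : J1) : R := 'D_w f p.
Definition dx (a : 'I_k) (p : J1) (w : J1) : R := xc w a.

Definition S (a : 'I_k) (p : J1) (w : J1) : J1 :=
  \sum_(i < n) (qc w i - \sum_(b < k) vc p i b * xc w b) *: e_v i a.

Definition Theta (L : J1 -> R) (a : 'I_k) (p : J1) (w : J1) : R :=
  L p * dx a p w + dF L p (S a p w).

(* Lie derivative of a 1-form along a vector field, coordinate formula
   (L_X omega)_p(w) = X_p(omega(w)) + omega_p(D_w X)  (w extended as a constant field) *)
Definition lie1 (X : J1 -> J1) (om : J1 -> J1 -> R) (p : J1) (w : J1) : R :=
  'D_(X p) (fun p' => om p' w) p + om p ('D_w X p).

Definition is_SOPDE (D : set J1) (G : 'I_k -> J1 -> J1) : Prop :=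
  (forall b, smooth_vf D (G b)) /\
  forall b p, D p ->
    (forall a, xc (G b p) a = (a == b)%:R) /\
    (forall i, qc (G b p) i - \sum_(c < k) vc p i c * xc (G b p) c = 0).

Definition integral_section_through (D : set J1) (G : 'I_k -> J1 -> J1)
    (U : set 'rV[R]_k) (psi : 'rV[R]_k -> J1) (p : J1) : Prop :=
  open U /\ (exists2 y0, U y0 & psi y0 = p) /\
  forall y, U y -> D (psi y) /\ differentiable psi y /\
    forall a : 'I_k, 'D_(delta_mx 0 a) psi y = G a (psi y).

(* integrable SOPDE: integral sections through every point, together with the
   paper's standing assumption [Gamma_a, Gamma_b] = 0 *)
Definition integrable_SOPDE (D : set J1) (G : 'I_k -> J1 -> J1) : Prop :=
  is_SOPDE D G /\
  (forall p, D p -> exists U psi, integral_section_through D G U psi p) /\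
  (forall a b p, D p -> lie_bracket (G a) (G b) p = 0).

End J1.

(* Main.v *)
Require Import Defs.
From HB Require Import structures.
From mathcomp Require Import all_boot all_order all_algebra.
From mathcomp Require Import all_classical all_reals.
From mathcomp Require Import topology normedtype derive.
Import Order.TTheory GRing.Theory Num.Theory.
Import numFieldNormedType.Exports.
Local Open Scope classical_set_scope.
Local Open Scope ring_scope.
From mathcomp Require Import ring.
Lemma alg_key (R : comRingType) (k n : nat) (Lx : 'I_k -> R) (Lq : 'I_n -> R)
  (Lv V M W : 'I_n -> 'I_k -> R) (Gm : 'I_n -> 'I_k -> 'I_k -> R) (X : 'I_k -> R) (Q : 'I_n -> R) :
  (forall i a b, Gm i a b = Gm i b a) ->
  \sum_(a < k) ((Lx a + \sum_(i < n) V i a * Lq i + \sum_(i < n) \sum_(b < k) Gm i a b * Lv i b) * X a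
     + \sum_(i < n) ((- \sum_(b < k) Gm i a b * X b) * Lv i a + (Q i - \sum_(b < k) V i b * X b) * M i a)
     + \sum_(i < n) W i a * Lv i a)
  - (\sum_(b < k) X b * Lx b + \sum_(i < n) Q i * Lq i + \sum_(i < n) \sum_(a < k) W i a * Lv i a)
  = \sum_(i < n) (Q i - \sum_(b < k) V i b * X b) * (\sum_(a < k) M i a - Lq i).
Proof.
move=> sym.
set G1 := \sum_(i < n) \sum_(a < k) \sum_(b < k) Gm i a b * Lv i b * X a.
set S1 := \sum_(a < k) \sum_(i < n) (Q i - \sum_(b < k) V i b * X b) * M i a.
set S2 := \sum_(i < n) \sum_(b < k) V i b * X b * Lq i.
set S3 := \sum_(i < n) \sum_(a < k) W i a * Lv i a.
set S4 := \sum_(b < k) X b * Lx b.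
set S5 := \sum_(i < n) Q i * Lq i.
have h1 : \sum_(a < k) (Lx a + \sum_(i < n) V i a * Lq i + \sum_(i < n) \sum_(b < k) Gm i a b * Lv i b) * X a
   = S4 + S2 + G1.
  under eq_bigr do rewrite !mulrDl.
  rewrite !big_split /=; congr (_ + _ + _).
  - by apply: eq_bigr => a _; rewrite mulrC.
  - rewrite /S2 exchange_big /=; apply: eq_bigr => a _; rewrite mulr_suml.
    by apply: eq_bigr => i _; rewrite mulrAC.
  - rewrite /G1 exchange_big /=; apply: eq_bigr => a _; rewrite mulr_suml.
    by apply: eq_bigr => i _; rewrite mulr_suml.
have h2 : \sum_(a < k) \sum_(i < n) ((- \sum_(b < k) Gm i a b * X b) * Lv i a + (Q i - \sum_(b < k) V i b * X b) * M i a)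
   = - G1 + S1.
  under eq_bigr do rewrite big_split /=.
  rewrite big_split /=; congr (_ + _).
  rewrite /G1 exchange_big /= -sumrN; apply: eq_bigr => i _.
  under eq_bigr do rewrite mulNr. rewrite sumrN; congr (- _).
  rewrite exchange_big /=; apply: eq_bigr => a _.
  rewrite mulr_suml; apply: eq_bigr => b _.
  by rewrite sym mulrAC.
have h3 : \sum_(a < k) \sum_(i < n) W i a * Lv i a = S3 by rewrite /S3 exchange_big.
have h4 : \sum_(i < n) (Q i - \sum_(b < k) V i b * X b) * (\sum_(a < k) M i a - Lq i) = S1 - S5 + S2.
  rewrite /S1 exchange_big /= /S5 /S2 -sumrN -!big_split /=; apply: eq_bigr => i _.
  rewrite mulrBr mulr_sumr mulrBl mulr_suml.
  by rewrite -sumrN opprB; ring.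
rewrite !big_split /= h1 h2 h3 h4; ring.
Qed.
Section An.
Variable R : realType.

Lemma derive_aff (V W : normedModType R) (f : V -> W) (c v : V) (d : W) :
  (forall h : R, f (h *: v + c) - f c = h *: d) -> derivable f c v /\ 'D_v f c = d.
Proof.
move=> hf.
have H : (fun h : R => h^-1 *: ((f \o shift c) (h *: v) - f c)) @ 0^' --> d.
  apply: cvg_trans (cvg_cst d).
  apply: near_eq_cvg; near=> h.
  rewrite /= hf scalerA mulVf ?scale1r //.
  by near: h; exact: nbhs_dnbhs_neq.
2: split; [by rewrite /derivable; apply/cvg_ex; exists d | exact: cvg_lim H].
exact: dnbhs_filter.
Unshelve. all: by end_near. Qed.

Lemma derive_pairP (U V1 V2 : normedModType R) (f : U -> V1 * V2) p u :
  derivable (fun x => (f x).1) p u -> derivable (fun x => (f x).2) p u ->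
  derivable f p u /\ 'D_u f p = ('D_u (fun x => (f x).1) p, 'D_u (fun x => (f x).2) p).
Proof.
move=> d1 d2.
have H : (fun h : R => h^-1 *: ((f \o shift p) (h *: u) - f p)) @ 0^' -->
   ('D_u (fun x => (f x).1) p, 'D_u (fun x => (f x).2) p).
  have -> : (fun h : R => h^-1 *: ((f \o shift p) (h *: u) - f p)) =
    (fun h => (h^-1 *: (((fun x => (f x).1) \o shift p) (h *: u) - (f p).1),
               h^-1 *: (((fun x => (f x).2) \o shift p) (h *: u) - (f p).2))).
    by apply: funext => h; case: (f p) => a b /=; case: (f _).
  exact: cvg_pair d1 d2.
split; [by rewrite /derivable; apply/cvg_ex; eexists; exact: H | exact: cvg_lim H].
Qed.

Variables k n : nat.
Local Notation J := (J1 R k n).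

Lemma derive_vf (X : J -> J) p u :
 (forall a, derivable (fun q => xc (X q) a) p u) ->
 (forall i, derivable (fun q => qc (X q) i) p u) ->
 (forall i a, derivable (fun q => vc (X q) i a) p u) ->
 (forall a, xc ('D_u X p) a = 'D_u (fun q => xc (X q) a) p) /\
 (forall i, qc ('D_u X p) i = 'D_u (fun q => qc (X q) i) p).
Proof.
move=> hx hq hv.
have d1 : derivable (fun q => (X q).1) p u.
  by apply/derivable_mxP => i j; rewrite (ord1 i); exact: hx.
have d21 : derivable (fun q => (X q).2.1) p u.
  by apply/derivable_mxP => i j; rewrite (ord1 i); exact: hq.
have d22 : derivable (fun q => (X q).2.2) p u.
  by apply/derivable_mxP => i j; exact: hv.
have [d2 e2] := @derive_pairP _ _ _ (fun q => (X q).2) p u d21 d22.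
have [d e] := @derive_pairP _ _ _ X p u d1 d2.
split.
- move=> a; rewrite /xc e /= derive_mx // mxE //.
- move=> i; rewrite /qc e /= e2 /= derive_mx // mxE //.
Qed.

Lemma derive_vc (u p : J) i b : derivable (fun q : J => vc q i b) p u /\ 'D_u (fun q : J => vc q i b) p = vc u i b.
Proof. apply: derive_aff => h; by rewrite /vc /= !mxE addrK. Qed.

Lemma fst_sum I r (P : pred I) (F : I -> J) : (\sum_(i <- r | P i) F i).1 = \sum_(i <- r | P i) (F i).1.
Proof. by apply: (big_morph fst) => //. Qed.
Lemma snd_sum I r (P : pred I) (F : I -> J) : (\sum_(i <- r | P i) F i).2 = \sum_(i <- r | P i) (F i).2.
Proof. by apply: (big_morph snd) => //. Qed.
Lemma snd_sum2 I r (P : pred I) (F : I -> ('rV[R]_n * 'M[R]_(n,k))%type) : (\sum_(i <- r | P i) F i).2 = \sum_(i <- r | P i) (F i).2.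
Proof. by apply: (big_morph snd) => //. Qed.
Lemma fst_sum2 I r (P : pred I) (F : I -> ('rV[R]_n * 'M[R]_(n,k))%type) : (\sum_(i <- r | P i) F i).1 = \sum_(i <- r | P i) (F i).1.
Proof. by apply: (big_morph fst) => //. Qed.
Lemma expand (z : J) : z = \sum_(a < k) xc z a *: e_x R n a + \sum_(i < n) qc z i *: e_q R k i
   + \sum_(i < n) \sum_(a < k) vc z i a *: e_v R i a.
Proof.
case: z => x [q v].
apply: injective_projections => /=.
  rewrite !fst_sum /=.
  under [X in _ = _ + _ + X]eq_bigr do rewrite fst_sum /=.
  under [X in _ = _ + X + _]eq_bigr do rewrite scaler0.
  under [X in _ = _ + _ + X]eq_bigr do (under eq_bigr do rewrite scaler0; rewrite big1_eq).
  rewrite !big1_eq !addr0 {1}[x]matrix_sum_delta big_ord1.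
  by apply: eq_bigr => j _; rewrite /xc (ord1 (0 : 'I_1)).
rewrite !snd_sum /=.
apply: injective_projections => /=.
  rewrite !fst_sum2 /=.
  under [X in _ = _ + _ + X]eq_bigr do rewrite snd_sum fst_sum2 /=.
  under [X in _ = X + _ + _]eq_bigr do rewrite scaler0.
  under [X in _ = _ + _ + X]eq_bigr do (under eq_bigr do rewrite scaler0; rewrite big1_eq).
  rewrite !big1_eq addr0 add0r {1}[q]matrix_sum_delta big_ord1.
  by apply: eq_bigr => j _; rewrite /qc.
rewrite !snd_sum2 /=.
under [X in _ = _ + _ + X]eq_bigr do rewrite snd_sum snd_sum2 /=.
under [X in _ = X + _ + _]eq_bigr do rewrite scaler0.
under [X in _ = _ + X + _]eq_bigr do rewrite scaler0.
rewrite !big1_eq !add0r {1}[v]matrix_sum_delta.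
by [].
Qed.

Lemma dMul (f g : J -> R) q u : derivable f q u -> derivable g q u ->
  derivable (fun x => f x * g x) q u /\ 'D_u (fun x => f x * g x) q = 'D_u f q * g q + f q * 'D_u g q.
Proof.
move=> df dg; split; first exact: (derivableM df dg).
have := deriveM df dg => /= ->; rewrite addrC mulrC; congr (_ + _); rewrite mulrC //.
Qed.

Lemma dSum m (h : 'I_m -> J -> R) q u : (forall i, derivable (h i) q u) ->
  derivable (fun x => \sum_(i < m) h i x) q u /\
  'D_u (fun x => \sum_(i < m) h i x) q = \sum_(i < m) 'D_u (h i) q.
Proof.
move=> dh; rewrite -fct_sumE; split; [exact: derivable_sum | exact: derive_sum].
Qed.

Lemma dL_expand (f : J -> R) q u : differentiable f q ->
 'D_u f q = \sum_(a < k) xc u a * 'D_(e_x R n a) f q + \sum_(i < n) qc u i * 'D_(e_q R k i) f q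
   + \sum_(i < n) \sum_(a < k) vc u i a * 'D_(e_v R i a) f q.
Proof.
move=> df; rewrite [LHS]deriveE // {1}(expand u) !linearD !linear_sum.
congr (_ + _ + _); apply: eq_bigr => i _.
- by rewrite linearZ deriveE.
- by rewrite linearZ deriveE.
- by rewrite linear_sum; apply: eq_bigr => a _; rewrite linearZ deriveE.
Qed.

Lemma dS_expand (f : J -> R) q a w : differentiable f q ->
 'D_(S a q w) f q = \sum_(i < n) (qc w i - \sum_(b < k) vc q i b * xc w b) * 'D_(e_v R i a) f q.
Proof.
move=> df; rewrite [LHS]deriveE // /S linear_sum; apply: eq_bigr => i _.
by rewrite linearZ deriveE.
Qed.

End An.
Arguments dMul {R k n f g q u}.
Arguments dSum {R k n m h q u}.
Arguments dL_expand {R k n}.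
Arguments dS_expand {R k n}.
Arguments derive_vc {R k n}.

Section Main.
Variables (R : realType) (k n : nat) (D : set (J1 R k n)) (L : J1 R k n -> R)
  (G : 'I_k -> J1 R k n -> J1 R k n).
Hypotheses (hD : open D) (hL : smooth_on D L) (hG : integrable_SOPDE D G).
Local Notation J := (J1 R k n).

Lemma dAdd (f g : J -> R) q u : derivable f q u -> derivable g q u ->
  derivable (fun x => f x + g x) q u /\ 'D_u (fun x => f x + g x) q = 'D_u f q + 'D_u g q.
Proof. by move=> df dg; split; [exact: derivableD | exact: deriveD]. Qed.

Lemma Ldiff q : D q -> differentiable L q.
Proof. by move=> Dq; exact: (hL [::] q Dq). Qed.

Lemma ldiff i a q : D q -> differentiable (fun x => 'D_(e_v R i a) L x) q.
Proof. by move=> Dq; exact: (hL [:: e_v R i a] q Dq). Qed.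

Lemma nearD p : D p -> \forall q \near p, D q.
Proof. by move=> Dp; apply: open_nbhs_nbhs; split. Qed.

Lemma Gx a b q : D q -> xc (G a q) b = (b == a)%:R.
Proof. by move=> Dq; have [_ /(_ a q Dq) [-> _]] := hG.1. Qed.

Lemma Gq a i q : D q -> qc (G a q) i = vc q i a.
Proof.
move=> Dq; have [_ /(_ a q Dq) [_ /(_ i) /eqP]] := hG.1; rewrite subr_eq0 => /eqP ->.
under eq_bigr do rewrite Gx //.
rewrite (bigD1 a) //= eqxx mulr1 big1 ?addr0 // => b /negbTE ->; by rewrite mulr0.
Qed.

Lemma DGcomp a q u : D q ->
 (forall b, xc ('D_u (G a) q) b = 'D_u (fun x => xc (G a x) b) q) /\
 (forall i, qc ('D_u (G a) q) i = 'D_u (fun x => qc (G a x) i) q).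
Proof.
move=> Dq; have [hx [hq hv]] := hG.1.1 a.
apply: derive_vf => [b|i|i b]; apply: diff_derivable.
- exact: (hx b [::] q Dq).
- exact: (hq i [::] q Dq).
- exact: (hv i b [::] q Dq).
Qed.

Lemma dGx a b u q : D q -> xc ('D_u (G a) q) b = 0.
Proof.
move=> Dq; rewrite (DGcomp a q u Dq).1.
rewrite (@near_eq_derive R J R _ (fun _ : J => (b == a)%:R : R)); first by rewrite derive_cst.
by near=> x; rewrite Gx //; near: x; exact: nearD.
Unshelve. all: by end_near. Qed.

Lemma dGq a i u q : D q -> qc ('D_u (G a) q) i = vc u i a.
Proof.
move=> Dq; rewrite (DGcomp a q u Dq).2.
rewrite (@near_eq_derive R J R _ (fun x : J => vc x i a)); first exact: (derive_vc u q i a).2.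
by near=> x; rewrite Gq //; near: x; exact: nearD.
Unshelve. all: by end_near. Qed.

Lemma Gsym i a b q : D q -> vc (G a q) i b = vc (G b q) i a.
Proof.
move=> Dq; have := hG.2.2 a b q Dq; rewrite /lie_bracket => /eqP; rewrite subr_eq0 => /eqP E.
by rewrite -(dGq b i (G a q) q Dq) -(dGq a i (G b q) q Dq) E.
Qed.


Definition th (x : J) (w : J) (i : 'I_n) := qc w i - \sum_(b < k) vc x i b * xc w b.

Lemma Theta_eq a x w : D x ->
  Theta L a x w = L x * xc w a + \sum_(i < n) th x w i * 'D_(e_v R i a) L x.
Proof. by move=> Dx; rewrite /Theta /dF /dx dS_expand //; exact: Ldiff. Qed.

Lemma th_der u x w i : derivable (fun y => th y w i) x u /\
  'D_u (fun y => th y w i) x = - \sum_(b < k) vc u i b * xc w b.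
Proof.
apply: derive_aff => h; rewrite /th /vc /=.
under eq_bigr do rewrite !mxE mulrDl.
rewrite big_split /=.
have -> : \sum_(b < k) h * u.2.2 i b * xc w b = h * \sum_(b < k) u.2.2 i b * xc w b.
  by rewrite mulr_sumr; apply: eq_bigr => b _; rewrite mulrA.
rewrite -[h *: _]/(h * _); ring.
Qed.

Lemma Term1 a p w : D p ->
  'D_(G a p) (fun x => Theta L a x w) p =
  'D_(G a p) L p * xc w a + \sum_(i < n) ((- \sum_(b < k) vc (G a p) i b * xc w b) * 'D_(e_v R i a) L p
     + th p w i * 'D_(G a p) (fun x => 'D_(e_v R i a) L x) p).
Proof.
move=> Dp.
rewrite (@near_eq_derive R J R _ (fun x => L x * xc w a + \sum_(i < n) th x w i * 'D_(e_v R i a) L x)); last first.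
  by near=> x; rewrite Theta_eq //; near: x; exact: nearD.
set u := G a p.
have dL : derivable L p u by apply: diff_derivable; exact: Ldiff.
have [d1 e1] := dMul dL (derivable_cst (xc w a : R) p u).
have dl : forall i, derivable (fun x => 'D_(e_v R i a) L x) p u.
  by move=> i; apply: diff_derivable; exact: ldiff.
have d2 : forall i, derivable (fun x => th x w i * 'D_(e_v R i a) L x) p u.
  by move=> i; exact: (dMul (th_der u p w i).1 (dl i)).1.
have [d3 e3] := dSum d2.
have [_ ->] := dAdd _ _ _ _ d1 d3.
rewrite e1 derive_cst mulr0 addr0 e3; congr (_ + _); apply: eq_bigr => i _.
by rewrite (dMul (th_der u p w i).1 (dl i)).2 (th_der u p w i).2.
Unshelve. all: by end_near. Qed.

Lemma Term2 a p w : D p ->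
  Theta L a p ('D_w (G a) p) = \sum_(i < n) vc w i a * 'D_(e_v R i a) L p.
Proof.
move=> Dp; rewrite Theta_eq // dGx // mulr0 add0r; apply: eq_bigr => i _.
rewrite /th dGq //; congr (_ * _); rewrite big1 ?subr0 // => b _; by rewrite dGx // mulr0.
Qed.


Lemma key p w : D p ->
  \sum_(a < k) lie1 (G a) (Theta L a) p w - dF L p w =
  \sum_(i < n) th p w i * (\sum_(a < k) vfapp (G a) (fun p' => 'D_(e_v R i a) L p') p
                               - 'D_(e_q R k i) L p).
Proof.
move=> Dp.
have hGL : forall a, 'D_(G a p) L p = 'D_(e_x R n a) L p
   + \sum_(i < n) vc p i a * 'D_(e_q R k i) L p
   + \sum_(i < n) \sum_(b < k) vc (G a p) i b * 'D_(e_v R i b) L p.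
  move=> a; rewrite (dL_expand L p (G a p) (Ldiff p Dp)); congr (_ + _ + _).
    under eq_bigr do rewrite Gx //.
    rewrite (bigD1 a) //= eqxx mul1r big1 ?addr0 // => b /negbTE ->; by rewrite mul0r.
  by apply: eq_bigr => i _; rewrite Gq.
rewrite /lie1.
under eq_bigr do rewrite Term1 // Term2 // hGL.
rewrite /dF (dL_expand L p w (Ldiff p Dp)) /vfapp /th.
exact: (@alg_key R k n (fun b => 'D_(e_x R n b) L p) (fun i => 'D_(e_q R k i) L p)
  (fun i b => 'D_(e_v R i b) L p) (fun i a => vc p i a)
  (fun i a => 'D_(G a p) (fun x => 'D_(e_v R i a) L x) p) (fun i a => vc w i a)
  (fun i a b => vc (G a p) i b) (fun b => xc w b) (fun i => qc w i)
  (fun i a b => Gsym i a b p Dp)).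
Qed.

End Main.

Lemma qc_eq (R : realType) (k n : nat) (i j : 'I_n) : qc (e_q R k i) j = (i == j)%:R.
Proof. by rewrite /qc /e_q /= mxE eqxx eq_sym. Qed.
Lemma xc_eq (R : realType) (k n : nat) (i : 'I_n) (b : 'I_k) : xc (e_q R k i) b = 0.
Proof. by rewrite /xc /e_q /= mxE. Qed.

Theorem mainTheorem3 (R : realType) (k n : nat) (D : set (J1 R k n))
  (L : J1 R k n -> R) (G : 'I_k -> J1 R k n -> J1 R k n) :
  open D -> smooth_on D L -> integrable_SOPDE D G ->
  (forall p, D p -> forall w : J1 R k n,
     \sum_(a < k) lie1 (G a) (Theta L a) p w = dF L p w)
  <->
  (forall p, D p -> forall i : 'I_n,
     \sum_(a < k) vfapp (G a) (fun p' => 'D_(@e_v R k n i a) L p') p - 'D_(@e_q R k n i) L p = 0).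
Proof.
move=> hD hL hG; split.
- move=> H p Dp i.
  have := @key R k n D L G hD hL hG p (e_q R k i) Dp.
  rewrite (H p Dp) subrr => /esym.
  have th0 : forall j, @th R k n p (e_q R k i) j = (i == j)%:R.
    move=> j; rewrite /th qc_eq big1 ?subr0 // => b _.
    by rewrite xc_eq mulr0.
  under eq_bigr do rewrite th0.
  have E : forall F : 'I_n -> R, \sum_(j < n) (i == j)%:R * F j = F i.
    move=> F; rewrite (bigD1 i) //= eqxx mul1r big1 ?addr0 // => j /negbTE.
    by rewrite eq_sym => ->; rewrite mul0r.
  by rewrite E.
- move=> H p Dp w; apply/eqP; rewrite -subr_eq0; apply/eqP.
  rewrite (@key R k n D L G hD hL hG p w Dp) big1 // => i _; by rewrite H // mulr0.
Qed.
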